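(* Let $m,n\ge 1$, $k=\min(m,n)$, and let $M^\star\in\mathbb{R}^{m\times n}$ have singular value decomposition $M^\star=P\Sigma Q^\top$ with $P\in\mathbb{R}^{m\times k}$, $Q\in\mathbb{R}^{n\times k}$ having orthonormal columns $p_i,q_i$ and $\Sigma=\mathrm{diag}(\sigma_1,\dots,\sigma_k)$ with $\sigma_1>\sigma_2>\cdots>\sigma_k>0$. For $r\in\{1,\dots,k\}$ let $A_r=\sum_{i=1}^r\sigma_ip_iq_i^\top$, let $\Pi_S$ denote the $k\times k$ diagonal matrix with $(\Pi_S)_{ii}=1$ if $i\in S$ and $0$ otherwise, $[r]=\{1,\dots,r\}$, and for $U\in\mathbb{R}^{m\times k}$, $V\in\mathbb{R}^{n\times k}$ let $$\mathcal{E}(U,V,r)=\min_{S_r\subseteq\{1,\dots,k\},\,|S_r|=r}\bigl\|U\Pi_{S_r}V^\top-A_r\bigr\|_F^2.$$ Let $$\mathcal{M}_{\mathrm{NSL}}=\arg\min_{U\in\mathbb{R}^{m\times k},\,V\in\mathbb{R}^{n\times k}}\frac1k\sum_{r=1}^k\bigl\|U\Pi_{[r]}V^\top-M^\star\bigr\|_F^2.$$ Then for every $(U,V)\in\mathcal{M}_{\mathrm{NSL}}$ and every $r\in\{1,\dots,k\}$, $\mathcal{E}(U,V,r)=0$.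
   Context: $\|\cdot\|_F$ is the Frobenius norm. *)

(* Defs.v *)
From mathcomp Require Import all_boot all_order all_algebra.
From mathcomp Require Import reals.
Set Implicit Arguments. Unset Strict Implicit. Unset Printing Implicit Defensive.
Import Order.TTheory GRing.Theory Num.Theory.
Local Open Scope ring_scope.

Definition frob2 {R : realType} {m n : nat} (A : 'M[R]_(m, n)) : R :=
  \sum_(i < m) \sum_(j < n) A i j ^+ 2.

Definition PiS {R : realType} {k : nat} (S : {set 'I_k}) : 'M[R]_k :=
  diag_mx (\row_(i < k) (if i \in S then 1 else 0)).

(* [r] = {1,...,r}, i.e. 0-based indices i < r *)
Definition firstr (k r : nat) : {set 'I_k} := [set i : 'I_k | (i < r)%N].

Definition Ar {R : realType} {m n k : nat} (P : 'M[R]_(m, k)) (Q : 'M[R]_(n, k))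
  (sigma : 'I_k -> R) (r : nat) : 'M[R]_(m, n) :=
  \sum_(i < k | (i < r)%N) sigma i *: (col i P *m (col i Q)^T).

(* E(U,V,r) = min over S with |S| = r of ||U Pi_S V^T - A_r||_F^2.
   The seed of the min is the value at S = [r], itself a candidate when r <= k. *)
Definition Eerr {R : realType} {m n k : nat} (U : 'M[R]_(m, k)) (V : 'M[R]_(n, k))
  (P : 'M[R]_(m, k)) (Q : 'M[R]_(n, k)) (sigma : 'I_k -> R) (r : nat) : R :=
  \big[Num.min/frob2 (U *m PiS (firstr k r) *m V^T - Ar P Q sigma r)]_(S : {set 'I_k} | #|S| == r)
     frob2 (U *m PiS S *m V^T - Ar P Q sigma r).

Definition nsl_loss {R : realType} {m n k : nat} (M : 'M[R]_(m, n))
  (U : 'M[R]_(m, k)) (V : 'M[R]_(n, k)) : R :=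
  k%:R^-1 * \sum_(1 <= r < k.+1) frob2 (U *m PiS (firstr k r) *m V^T - M).

Definition in_M_NSL {R : realType} {m n k : nat} (M : 'M[R]_(m, n))
  (U : 'M[R]_(m, k)) (V : 'M[R]_(n, k)) : Prop :=
  forall (U' : 'M[R]_(m, k)) (V' : 'M[R]_(n, k)), nsl_loss M U V <= nsl_loss M U' V'.

(* Main.v *)
Require Import Defs.
From mathcomp Require Import all_boot all_order all_algebra.
From mathcomp Require Import reals.
From mathcomp Require Import ring lra.
Import Order.TTheory GRing.Theory Num.Theory.
Local Open Scope ring_scope.

Lemma frob2E {R : realType} {m n : nat} (A : 'M[R]_(m,n)) : frob2 A = \tr (A *m A^T).
Proof.
rewrite /frob2 /mxtrace; apply: eq_bigr => i _; rewrite mxE.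
by apply: eq_bigr => j _; rewrite !mxE expr2.
Qed.

Lemma frob2_ge0 {R : realType} {m n : nat} (A : 'M[R]_(m,n)) : 0 <= frob2 A.
Proof. by apply: sumr_ge0 => i _; apply: sumr_ge0 => j _; apply: sqr_ge0. Qed.

Lemma frob2_eq0 {R : realType} {m n : nat} (A : 'M[R]_(m,n)) : frob2 A = 0 -> A = 0.
Proof.
move=> h; apply/matrixP => i j; rewrite mxE.
have hi := psumr_eq0P (fun i _ => sumr_ge0 _ (fun j _ => sqr_ge0 (A i j))) h.
have := psumr_eq0P (fun j _ => sqr_ge0 (A i j)) (hi i isT) (i := j) isT.
by move/eqP; rewrite sqrf_eq0 => /eqP.
Qed.

Lemma frob2N {R : realType} {m n : nat} (A : 'M[R]_(m,n)) : frob2 (- A) = frob2 A.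
Proof.
by apply: eq_bigr => i _; apply: eq_bigr => j _; rewrite mxE sqrrN.
Qed.

Definition symidem {R : realType} {m : nat} (Pi : 'M[R]_m) := Pi^T = Pi /\ Pi *m Pi = Pi.

Lemma symidemC {R : realType} {m : nat} (Pi : 'M[R]_m) : symidem Pi -> symidem (1%:M - Pi).
Proof.
case=> h1 h2; split; first by rewrite linearB /= trmx1 h1.
by rewrite mulmxBl mul1mx mulmxBr mulmx1 h2 subrr subr0.
Qed.

Lemma tr_sq {R : realType} {m n : nat} (Pi : 'M[R]_m) (Y : 'M[R]_(m,n)) : symidem Pi ->
  frob2 (Pi *m Y) = \tr (Pi *m (Y *m Y^T)).
Proof.
case=> h1 h2; rewrite frob2E trmx_mul h1 mulmxA mxtrace_mulC !mulmxA.
by rewrite -[Y^T *m Pi *m Pi]mulmxA h2 mxtrace_mulC mulmxA mxtrace_mulC mulmxA.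
Qed.

Lemma pyth {R : realType} {m n : nat} (Pi : 'M[R]_m) (Y : 'M[R]_(m,n)) : symidem Pi ->
  frob2 Y = frob2 (Pi *m Y) + frob2 ((1%:M - Pi) *m Y).
Proof.
move=> h; rewrite (tr_sq Pi Y h) (tr_sq _ Y (symidemC _ h)) -mxtraceD -mulmxDl.
by rewrite addrC subrK mul1mx frob2E.
Qed.
Lemma gs_step {R : realType} {m : nat} (Pi' : 'M[R]_m) (b : 'cV[R]_m) : symidem Pi' ->
  exists Pi : 'M[R]_m, [/\ symidem Pi, Pi *m b = b, Pi *m Pi' = Pi' & \tr Pi <= \tr Pi' + 1].
Proof.
case=> h1 h2; set c := b - Pi' *m b.
have hc : Pi' *m c = 0 by rewrite mulmxBr mulmxA h2 subrr.
have hcT : c^T *m Pi' = 0 by rewrite -{1}h1 -trmx_mul hc trmx0.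
set s := (c^T *m c) 0 0.
have hs : c^T *m c = s%:M by rewrite {1}[c^T *m c]mx11_scalar.
have hb : b = c + Pi' *m b by rewrite subrK.
have hcb : c^T *m b = s%:M by rewrite {1}hb mulmxDr mulmxA hcT mul0mx addr0 hs.
have trs : \tr (c *m c^T) = s by rewrite mxtrace_mulC hs mxtrace_scalar.
case: (eqVneq s 0) => [s0 | sn0].
  have c0 : c = 0 by apply: frob2_eq0; rewrite frob2E trs.
  exists Pi'; split => //; last by rewrite lerDl.
  by rewrite {2}hb c0 add0r.
exists (Pi' + s^-1 *: (c *m c^T)); split.
- split; first by rewrite linearD linearZ /= trmx_mul trmxK h1.
  rewrite mulmxDl !mulmxDr h2 -!scalemxAl -!scalemxAr !mulmxA hc mul0mx.
  rewrite -(mulmxA c) hcT mulmx0 -[c *m c^T *m c]mulmxA hs mul_mx_scalar.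
  by rewrite -scalemxAl scalerA mulVf // scale1r !scaler0 !add0r addr0.
- rewrite mulmxDl -scalemxAl -mulmxA hcb mul_mx_scalar scalerA mulVf // scale1r.
  by rewrite addrC -hb.
- by rewrite mulmxDl -scalemxAl -mulmxA hcT mulmx0 scaler0 addr0.
- by rewrite mxtraceD mxtraceZ trs mulVf.
Qed.

Lemma gs {R : realType} {m k : nat} (B : 'M[R]_(m,k)) (r : nat) :
  exists Pi : 'M[R]_m, [/\ symidem Pi, \tr Pi <= r%:R &
    forall j : 'I_k, (j < r)%N -> Pi *m col j B = col j B].
Proof.
elim: r => [|r [Pi' [h1 h2 h3]]].
  exists 0; split => //; last by rewrite /mxtrace big1 // => i _; rewrite mxE.
  by split; rewrite ?trmx0 ?mul0mx.
case: (ltnP r k) => hr.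
  have [Pi [g1 g2 g3 g4]] := gs_step Pi' (col (Ordinal hr) B) h1.
  exists Pi; split => //.
    by rewrite -natr1 (le_trans g4) // lerD2r.
  move=> j; rewrite ltnS leq_eqVlt => /orP [/eqP hj | hj].
    have -> : j = Ordinal hr by apply: val_inj.
    exact: g2.
  by rewrite -(h3 j hj) mulmxA g3.
exists Pi'; split => //.
  by rewrite (le_trans h2) // ler_nat.
move=> j hj; apply: h3; exact: leq_trans (ltn_ord j) hr.
Qed.

Lemma col_ext {R : realType} {m k : nat} (Pi : 'M[R]_m) (B : 'M[R]_(m,k)) :
  (forall j, Pi *m col j B = col j B) -> Pi *m B = B.
Proof.
move=> h; apply/matrixP => i j.
have := congr1 (fun M : 'M_(m,1) => M i 0) (h j).
rewrite !mxE => <-; apply: eq_bigr => l _; by rewrite !mxE.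
Qed.

Lemma PiS_mul {R : realType} {m k : nat} (B : 'M[R]_(m,k)) (S : {set 'I_k}) i j :
  (B *m PiS S) i j = if j \in S then B i j else 0.
Proof. by rewrite /PiS mul_mx_diag !mxE; case: (j \in S); rewrite ?mulr1 ?mulr0. Qed.

Lemma proj_for {R : realType} {m k : nat} (B : 'M[R]_(m,k)) (r : nat) :
  B *m PiS (firstr k r) = B ->
  exists Pi : 'M[R]_m, [/\ symidem Pi, \tr Pi <= r%:R & Pi *m B = B].
Proof.
move=> hB; have [Pi [h1 h2 h3]] := gs B r.
exists Pi; split => //; apply: col_ext => j.
case: (ltnP j r) => hj; first exact: h3.
have -> : col j B = 0.
  apply/matrixP => i l; rewrite !mxE -hB PiS_mul /firstr inE.
  by rewrite ltnNge hj.
by rewrite mulmx0.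
Qed.

Lemma sqdiag {R : realType} {a b : nat} (A : 'M[R]_(a,b)) i :
  (A^T *m A) i i = \sum_l (A l i)^+2.
Proof. by rewrite mxE; apply: eq_bigr => l _; rewrite !mxE expr2. Qed.

Lemma symidem_PPt {R : realType} {m k : nat} (P : 'M[R]_(m,k)) :
  P^T *m P = 1%:M -> symidem (P *m P^T).
Proof.
move=> hP; split; first by rewrite trmx_mul trmxK.
by rewrite mulmxA -(mulmxA P) hP mulmx1.
Qed.

Lemma tr_nat {R : realType} {k : nat} (A : 'M[R]_k) : \tr A = \sum_i A i i.
Proof. by []. Qed.

Lemma weights {R : realType} {m k : nat} (P : 'M[R]_(m,k)) (Pi : 'M[R]_m) :
  P^T *m P = 1%:M -> symidem Pi ->
  [/\ forall i, 0 <= (P^T *m Pi *m P) i i,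
      forall i, (P^T *m Pi *m P) i i <= 1,
      \sum_i (P^T *m Pi *m P) i i <= \tr Pi,
      forall i, (P^T *m Pi *m P) i i = 0 -> forall a, (Pi *m P) a i = 0 &
      forall i, (P^T *m Pi *m P) i i = 1 -> forall a, (Pi *m P) a i = P a i].
Proof.
move=> hP [h1 h2].
have hW : P^T *m Pi *m P = (Pi *m P)^T *m (Pi *m P).
  by rewrite trmx_mul h1 !mulmxA -[P^T *m Pi *m Pi]mulmxA h2.
have hW' : forall i, 1 - (P^T *m Pi *m P) i i =
    (((1%:M - Pi) *m P)^T *m ((1%:M - Pi) *m P)) i i.
  move=> i; have [g1 g2] := symidemC Pi (conj h1 h2).
  rewrite trmx_mul g1 !mulmxA -[P^T *m (1%:M - Pi) *m (1%:M - Pi)]mulmxA g2.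
  by rewrite mulmxBr mulmx1 mulmxBl hP !mxE eqxx.
split.
- by move=> i; rewrite hW sqdiag; apply: sumr_ge0 => l _; apply: sqr_ge0.
- move=> i; rewrite -subr_ge0 hW' sqdiag; apply: sumr_ge0 => l _; apply: sqr_ge0.
- rewrite -tr_nat mxtrace_mulC mulmxA -subr_ge0.
  have [g1 g2] := symidemC _ (symidem_PPt P hP).
  have <- : frob2 (Pi *m (1%:M - P *m P^T)) = \tr Pi - \tr (P *m P^T *m Pi).
    rewrite (tr_sq _ _ (conj h1 h2)) g1 g2 mulmxBr mulmx1 linearB /=.
    by rewrite mxtrace_mulC.
  exact: frob2_ge0.

- move=> i; rewrite hW sqdiag => h0 a.
  have := psumr_eq0P (fun l _ => sqr_ge0 ((Pi *m P) l i)) h0 (i := a) isT.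
  by move/eqP; rewrite sqrf_eq0 => /eqP.
- move=> i h0 a; apply/eqP; rewrite -subr_eq0; apply/eqP.
  have : (((1%:M - Pi) *m P)^T *m ((1%:M - Pi) *m P)) i i = 0 by rewrite -hW' h0 subrr.
  rewrite sqdiag => h00.
  have := psumr_eq0P (fun l _ => sqr_ge0 (((1%:M - Pi) *m P) l i)) h00 (i := a) isT.
  move/eqP; rewrite sqrf_eq0 => /eqP.
  by rewrite mulmxBl mul1mx mxE mxE => h; rewrite -opprB h oppr0.
Qed.

Lemma frobPiM {R : realType} {m n k : nat} (P : 'M[R]_(m,k)) (Q : 'M[R]_(n,k))
  (d : 'rV[R]_k) (Pi : 'M[R]_m) :
  Q^T *m Q = 1%:M -> symidem Pi ->
  frob2 (Pi *m (P *m diag_mx d *m Q^T)) =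
    \sum_i (d 0 i)^+2 * (P^T *m Pi *m P) i i.
Proof.
move=> hQ h; rewrite (tr_sq _ _ h) !trmx_mul trmxK tr_diag_mx.
have -> : P *m diag_mx d *m Q^T *m (Q *m (diag_mx d *m P^T)) =
   (P *m diag_mx d *m diag_mx d) *m P^T.
  by rewrite -!mulmxA (mulmxA Q^T) hQ mul1mx.
rewrite mulmxA mxtrace_mulC !mulmxA tr_nat; apply: eq_bigr => i _.
by rewrite mul_mx_diag mxE mul_mx_diag mxE -mulrA -expr2 mulrC.
Qed.

Lemma cnt {R : realType} {k : nat} (r : nat) : (r <= k)%N ->
  \sum_(i < k) ((i < r)%N%:R : R) = r%:R.
Proof.
move=> hr; rewrite -(big_mkord xpredT (fun i => ((i < r)%N%:R : R))).
rewrite (big_cat_nat (leq0n r) hr) /=.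
rewrite (eq_big_nat _ _ (F2 := fun _ => 1)); last by move=> i /andP [_ ->].
rewrite sumr_const_nat subn0 (eq_big_nat _ _ (F2 := fun _ => 0)).
  by rewrite big1 ?addr0.
by move=> i /andP [h _]; rewrite ltnNge h.
Qed.

Lemma wlemma {R : realType} {k : nat} (a w : 'I_k -> R) (r : nat) : (1 <= r <= k)%N ->
  (forall i j : 'I_k, (i < j)%N -> a j < a i) -> (forall i, 0 < a i) ->
  (forall i, 0 <= w i) -> (forall i, w i <= 1) -> \sum_i w i <= r%:R ->
  \sum_i a i * w i <= \sum_i a i * (i < r)%N%:R /\
  (\sum_i a i * (i < r)%N%:R <= \sum_i a i * w i -> forall i, w i = (i < r)%N%:R).
Proof.
move=> /andP [r1 rk] hdec hpos w0 w1 hsum.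
have hr1 : (r.-1 < k)%N by rewrite prednK.
set t := a (Ordinal hr1).
set c := fun i : 'I_k => ((i < r)%N%:R : R).
have hc : \sum_i c i = r%:R by exact: cnt.
have hterm : forall i, 0 <= (c i - w i) * (a i - t).
  move=> i; rewrite /c; case: (ltnP i r) => hi.
    apply: mulr_ge0; first by rewrite subr_ge0.
    rewrite subr_ge0 /t; case: (ltngtP i r.-1) => h.
    - by apply/ltW/hdec.
    - by move: h; rewrite -ltnS prednK // ltnNge hi.
    - by rewrite (_ : Ordinal hr1 = i) //; apply: val_inj.
  rewrite add0r mulNr -mulrN opprB; apply: mulr_ge0 => //.
  rewrite subr_ge0 /t; apply/ltW/hdec => /=.
  by rewrite prednK.
have hid : \sum_i a i * c i - \sum_i a i * w i =
   \sum_i (c i - w i) * (a i - t) + t * (r%:R - \sum_i w i).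
  rewrite -hc -sumrB -sumrB mulr_sumr -big_split /=.
  by apply: eq_bigr => i _; ring.
have hA : 0 <= \sum_i (c i - w i) * (a i - t) by apply: sumr_ge0 => i _.
have tpos : 0 < t by apply: hpos.
have hB : 0 <= t * (r%:R - \sum_i w i) by apply: mulr_ge0; rewrite ?subr_ge0 // ltW.
split; first by rewrite -subr_ge0 hid addr_ge0.
move=> hle.
have hD : \sum_i a i * c i - \sum_i a i * w i = 0.
  by apply/eqP; rewrite eq_le subr_le0 hle /= hid addr_ge0.
move: hD; rewrite hid => /eqP; rewrite paddr_eq0 // => /andP [/eqP e1 /eqP e2].
have hw : \sum_i w i = r%:R.
  move/eqP: e2; rewrite mulf_eq0 (gt_eqF tpos) /= subr_eq0 => /eqP; by [].
have hz : forall i : 'I_k, (r <= i)%N -> w i = 0.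
  move=> i hi; have := psumr_eq0P (fun i _ => hterm i) e1 (i := i) isT.
  move/eqP; rewrite mulf_eq0 /c ltnNge hi /= sub0r oppr_eq0 subr_eq0 => /orP [/eqP //|].
  move=> /eqP hat; exfalso; move: (hdec (Ordinal hr1) i).
  by rewrite /= prednK // hi -/t hat ltxx => /(_ isT).
have hcw : \sum_i (c i - w i) = 0 by rewrite sumrB hc hw subrr.
move=> i; apply/eqP; rewrite eq_sym -subr_eq0; apply/eqP.
apply: (psumr_eq0P _ hcw) => // j _.
rewrite /c; case: (ltnP j r) => hj; first by rewrite subr_ge0.
by rewrite (hz j hj) subrr.
Qed.

Lemma symidem1 {R : realType} {m : nat} : symidem (1%:M : 'M[R]_m).
Proof. by split; rewrite ?trmx1 ?mul1mx. Qed.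

Lemma frobM {R : realType} {m n k : nat} (P : 'M[R]_(m,k)) (Q : 'M[R]_(n,k))
  (d : 'rV[R]_k) : P^T *m P = 1%:M -> Q^T *m Q = 1%:M ->
  frob2 (P *m diag_mx d *m Q^T) = \sum_i (d 0 i)^+2.
Proof.
move=> hP hQ; rewrite -[P *m _ *m _]mul1mx (frobPiM _ _ _ _ hQ symidem1).
by apply: eq_bigr => i _; rewrite mulmx1 hP mxE eqxx mulr1.
Qed.

Lemma resid {R : realType} {m n k : nat} (P : 'M[R]_(m,k)) (Q : 'M[R]_(n,k))
  (d : 'rV[R]_k) (Pi : 'M[R]_m) : P^T *m P = 1%:M -> Q^T *m Q = 1%:M -> symidem Pi ->
  frob2 ((1%:M - Pi) *m (P *m diag_mx d *m Q^T)) =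
    \sum_i (d 0 i)^+2 - \sum_i (d 0 i)^+2 * (P^T *m Pi *m P) i i.
Proof.
move=> hP hQ h; rewrite -(frobM P Q d hP hQ) (pyth Pi (P *m diag_mx d *m Q^T) h) (frobPiM _ _ _ _ hQ h).
by rewrite [X in _ = X]addrC addKr.
Qed.

Lemma PiS_idem {R : realType} {k : nat} (S : {set 'I_k}) :
  symidem (PiS S : 'M[R]_k).
Proof.
split; first by rewrite /PiS tr_diag_mx.
apply/matrixP => i j; rewrite PiS_mul /PiS !mxE.
by case hj: (j \in S); case: eqP => [->|]; rewrite ?hj ?mulr0n.
Qed.

Lemma PiS_B {R : realType} {m k : nat} (U : 'M[R]_(m,k)) (S : {set 'I_k}) :
  U *m PiS S *m PiS S = U *m PiS S.
Proof. by rewrite -mulmxA (proj2 (PiS_idem S)). Qed.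

Lemma Ar_eq {R : realType} {m n k : nat} (P : 'M[R]_(m,k)) (Q : 'M[R]_(n,k))
  (sigma : 'I_k -> R) (r : nat) :
  Ar P Q sigma r = P *m PiS (firstr k r) *m diag_mx (\row_i sigma i) *m Q^T.
Proof.
apply/matrixP => a b; rewrite /Ar summxE !mxE big_mkcond /=.
have E : forall x, (P *m PiS (firstr k r) *m diag_mx (\row_i sigma i)) a x =
   if (x < r)%N then P a x * sigma x else 0.
  move=> x; rewrite mul_mx_diag mxE PiS_mul /firstr inE mxE.
  by case: ifP => _; rewrite ?mul0r.
apply: eq_bigr => i _; rewrite E !mxE.
case: ifP => _; last by rewrite !mul0r.
rewrite big_ord1 !mxE; ring.
Qed.

Lemma lower {R : realType} {m n k : nat} (P : 'M[R]_(m,k)) (Q : 'M[R]_(n,k))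
  (sigma : 'I_k -> R) (U : 'M[R]_(m,k)) (V : 'M[R]_(n,k)) (r : nat) :
  P^T *m P = 1%:M -> Q^T *m Q = 1%:M ->
  (forall i j : 'I_k, (i < j)%N -> sigma j < sigma i) ->
  (forall i : 'I_k, 0 < sigma i) -> (1 <= r <= k)%N ->
  let M := P *m diag_mx (\row_i sigma i) *m Q^T in
  let c := \sum_i (sigma i)^+2 - \sum_i (sigma i)^+2 * (i < r)%N%:R in
  c <= frob2 (U *m PiS (firstr k r) *m V^T - M) /\
  (frob2 (U *m PiS (firstr k r) *m V^T - M) <= c ->
     U *m PiS (firstr k r) *m V^T = Ar P Q sigma r).
Proof.
move=> hP hQ hdec hpos hr M c.
set d := \row_i sigma i.
have dE : forall i, d 0 i = sigma i by move=> i; rewrite mxE.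
set B := U *m PiS (firstr k r).
have [Pi [hPi htr hPB]] := proj_for B r (PiS_B U (firstr k r)).
set X := B *m V^T.
have hPX : Pi *m X = X by rewrite /X mulmxA hPB.
have e1 := pyth Pi (X - M) hPi.
have e2 : (1%:M - Pi) *m (X - M) = - ((1%:M - Pi) *m M).
  by rewrite mulmxBr mulmxBl mul1mx hPX subrr sub0r.
rewrite e2 frob2N (resid P Q d Pi hP hQ hPi) in e1.
have [w0 w1 wsum wz wo] := weights P Pi hP hPi.
set w := fun i => (P^T *m Pi *m P) i i.
have := @wlemma R k (fun i => (sigma i)^+2) w r hr _ _ w0 w1 _.
case.
- move=> i j hij; have := hdec i j hij; have := hpos j => h0 h1.
  by rewrite !expr2 ltr_pM // ltW.
- by move=> i; rewrite exprn_gt0.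
- exact: le_trans wsum htr.
move=> hle heq.
have hsd : \sum_i d 0 i ^+ 2 = \sum_i (sigma i)^+2 by apply: eq_bigr => i _; rewrite dE.
have hsw : \sum_i d 0 i ^+ 2 * (P^T *m Pi *m P) i i = \sum_i (sigma i)^+2 * w i.
  by apply: eq_bigr => i _; rewrite dE.
rewrite hsd hsw in e1.
have f0 := frob2_ge0 (Pi *m (X - M)).
split.
  rewrite e1 /c; lra.
move=> hc.
have hw := heq ltac:(rewrite e1 /c in hc; lra).
have f00 : frob2 (Pi *m (X - M)) = 0 by rewrite e1 /c in hc; lra.
have hXM : X = Pi *m M.
  by apply/eqP; rewrite -subr_eq0 -[X in X - _]hPX -mulmxBr; apply/eqP/frob2_eq0.
have hPP : Pi *m P = P *m PiS (firstr k r).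
  apply/matrixP => a i; rewrite PiS_mul /firstr inE.
  case: ifP => hi.
    by apply: wo; rewrite /w in hw; rewrite hw hi.
  by apply: wz; rewrite /w in hw; rewrite hw hi.
by rewrite Ar_eq hXM /M !mulmxA hPP.
Qed.

Lemma achieve {R : realType} {m n k : nat} (P : 'M[R]_(m,k)) (Q : 'M[R]_(n,k))
  (sigma : 'I_k -> R) (r : nat) :
  P^T *m P = 1%:M -> Q^T *m Q = 1%:M ->
  let M := P *m diag_mx (\row_i sigma i) *m Q^T in
  frob2 (P *m diag_mx (\row_i sigma i) *m PiS (firstr k r) *m Q^T - M) =
  \sum_i (sigma i)^+2 - \sum_i (sigma i)^+2 * (i < r)%N%:R.
Proof.
move=> hP hQ M.
set d := \row_i sigma i.
set S := firstr k r.
set Pi0 := P *m PiS S *m P^T.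
have [s1 s2] := PiS_idem (R := R) S.
have h0 : symidem Pi0.
  split; first by rewrite /Pi0 !trmx_mul trmxK s1 mulmxA.
  by rewrite /Pi0 !mulmxA -(mulmxA _ P^T) hP mulmx1 -(mulmxA P) s2.
have hX : P *m diag_mx d *m PiS S *m Q^T = Pi0 *m M.
  rewrite /Pi0 /M !mulmxA -(mulmxA _ P^T) hP mulmx1 -(mulmxA P (diag_mx d)).
  by rewrite /PiS diag_mxC mulmxA.
have e : P *m diag_mx d *m PiS S *m Q^T - M = - ((1%:M - Pi0) *m M).
  by rewrite hX mulmxBl mul1mx opprB.
rewrite e frob2N (resid P Q d Pi0 hP hQ h0).
have W : P^T *m Pi0 *m P = PiS S.
  by rewrite /Pi0 !mulmxA hP mul1mx -mulmxA hP mulmx1.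
rewrite W; congr (_ - _); first by apply: eq_bigr => i _; rewrite !mxE.
apply: eq_bigr => i _; rewrite !mxE eqxx mulr1n /S /firstr inE.
by case: (i < r)%N.
Qed.

Lemma Eerr0 {R : realType} {m n k : nat} (U : 'M[R]_(m, k)) (V : 'M[R]_(n, k))
  (P : 'M[R]_(m, k)) (Q : 'M[R]_(n, k)) (sigma : 'I_k -> R) (r : nat) :
  U *m PiS (firstr k r) *m V^T = Ar P Q sigma r -> Eerr U V P Q sigma r = 0.
Proof.
move=> h; rewrite /Eerr h subrr.
have z : frob2 (0 : 'M[R]_(m,n)) = 0.
  by rewrite /frob2 big1 // => i _; rewrite big1 // => j _; rewrite mxE expr0n.
rewrite z; apply/eqP; rewrite eq_le; apply/andP; split.
  apply: (big_rec (fun x => x <= 0)) => // S x _ hx.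
  by rewrite ge_min hx orbT.
apply: (big_ind (fun x => 0 <= x)) => //; last by move=> S _; apply: frob2_ge0.
by move=> x y hx hy; rewrite le_min hx hy.
Qed.

Theorem theorem4p3 (R : realType) (m n : nat) (hm : (1 <= m)%N) (hn : (1 <= n)%N)
  (Mstar : 'M[R]_(m, n)) (P : 'M[R]_(m, minn m n)) (Q : 'M[R]_(n, minn m n))
  (sigma : 'I_(minn m n) -> R)
  (hP : P^T *m P = 1%:M) (hQ : Q^T *m Q = 1%:M)
  (hdec : forall i j : 'I_(minn m n), (i < j)%N -> sigma j < sigma i)
  (hpos : forall i : 'I_(minn m n), 0 < sigma i)
  (hsvd : Mstar = P *m diag_mx (\row_i sigma i) *m Q^T)
  (U : 'M[R]_(m, minn m n)) (V : 'M[R]_(n, minn m n))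
  (hUV : in_M_NSL Mstar U V) :
  forall r : nat, (1 <= r <= minn m n)%N -> Eerr U V P Q sigma r = 0.
Proof.
move=> r hr.
set k := minn m n in P Q sigma hP hQ hdec hpos hsvd U V hUV hr *.
have hk : (0 < k)%N by rewrite /k leq_min hm hn.
set c := fun r => \sum_i (sigma i)^+2 - \sum_i (sigma i)^+2 * (i < r)%N%:R.
set f := fun r => frob2 (U *m PiS (firstr k r) *m V^T - Mstar).
have hlow : forall r, (1 <= r <= k)%N -> c r <= f r /\
    (f r <= c r -> U *m PiS (firstr k r) *m V^T = Ar P Q sigma r).
  by move=> r' hr'; rewrite /f hsvd; apply: lower.
have hach : forall r, frob2 (P *m diag_mx (\row_i sigma i) *m PiS (firstr k r) *m Q^T - Mstar) = c r.
  by move=> r'; rewrite hsvd; apply: achieve.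
have hl := hUV (P *m diag_mx (\row_i sigma i)) Q.
rewrite /nsl_loss (eq_bigr _ (fun r _ => hach r)) in hl.
rewrite ler_pM2l ?invr_gt0 ?ltr0n // in hl.
have hs : \sum_(1 <= i < k.+1) (f i - c i) <= 0 by rewrite sumrB subr_le0.
have hge : forall a b, (1 <= a)%N -> (b <= k.+1)%N -> 0 <= \sum_(a <= i < b) (f i - c i).
  move=> a b ha hb; rewrite big_nat_cond; apply: sumr_ge0 => i /andP [/andP [h1 h2] _].
  rewrite subr_ge0; apply: (proj1 (hlow i _)).
  by rewrite (leq_trans ha h1) -ltnS (leq_trans h2 hb).
have hfr : f r <= c r.
  move: hs; case/andP: hr => hr1 hrk.
  rewrite (big_cat_nat hr1 (leqW hrk)) /= (big_ltn (m:=r)) ?ltnS //.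
  have g1 := hge 1 r (leqnn 1) (leqW hrk).
  have g2 := hge r.+1 k.+1 (ltn0Sn r) (leqnn _).
  move=> hs; lra.
apply: Eerr0; exact: (proj2 (hlow r hr) hfr).
Qed.
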